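(* Let $X$ be a compact Hausdorff space with its canonical uniform structure, $f\colon X\setminus I(f)\to X$ a partially continuous self-map, and $\xi,\xi'$ two admissible sequences for $(X,f)$. Let $\mathcal E,\mathcal E',\mathcal E''$ be symmetric entourages with $\mathcal E'\circ\mathcal E'\subseteq\mathcal E$ and $\mathcal E''\circ\mathcal E''\subseteq\mathcal E'$, and let $n\ge0$. Then (i) if $\xi_n\subseteq\xi'_n$, then $S(n,\xi,\mathcal E)\le S(n,\xi',\mathcal E)$; (ii) if $\overline{\xi_n}\subseteq\overline{\xi'_n}$, then $R(n,\xi,\mathcal E)\le R(n,\xi',\mathcal E'')$. In particular, if $\overline{\xi_n}\subseteq\overline{\xi'_n}$ for all sufficiently large $n$, then $h_{\mathrm{top}}(f,\xi)\le h_{\mathrm{top}}(f,\xi')$.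
   Context: A partially continuous self-map is a continuous $f\colon X\setminus I(f)\to X$ with $I(f)$ closed. Entourages of the canonical uniform structure are the neighbourhoods of the diagonal; $\mathcal E'\circ\mathcal E'=\{(x,y):\exists z,(x,z),(z,y)\in\mathcal E'\}$. An admissible sequence is a sequence $\xi=(\xi_n)_{n\ge0}$ of subsets of $X$ with $\xi_n\subseteq X\setminus I(f)$ and $f(\xi_n)\subseteq\xi_{n-1}$ for $n\ge1$. Let $\xi^{\max}_0=X$, $\xi^{\max}_n=\{x\in X\setminus I(f):f(x)\in\xi^{\max}_{n-1}\}$; for $x\in\xi^{\max}_n$, $B^n_{\mathcal E}(x)=\{y\in\xi^{\max}_n:(f^i(x),f^i(y))\in\mathcal E,0\le i\le n\}$. Points $x,y\in\xi_n$ are $(n,\xi,\mathcal E)$-separated if $x\notin B^n_{\mathcal E}(y)$; $F\subset\xi_n$ is $(n,\xi,\mathcal E)$-covering if $\xi_n\subseteq\bigcup_{x\in F}B^n_{\mathcal E}(x)$. $R(n,\xi,\mathcal E)$ is the minimal cardinality of a covering set, $S(n,\xi,\mathcal E)$ the maximal cardinality of a pairwise separated set, and $h_{\mathrm{top}}(f,\xi)=\sup_{\mathcal E}\limsup_n\frac1n\log S(n,\xi,\mathcal E)=\sup_{\mathcal E}\limsup_n\frac1n\log R(n,\xi,\mathcal E)$ (set to $-\infty$ if some $\xi_n$ is empty). *)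

(* Defs.v *)
From HB Require Import structures.
From mathcomp Require Import all_boot all_order all_algebra finmap.
From mathcomp Require Import all_classical all_reals all_analysis.
Set Implicit Arguments. Unset Strict Implicit. Unset Printing Implicit Defensive.
Import Order.TTheory GRing.Theory Num.Theory.
Local Open Scope classical_set_scope.
Local Open Scope ring_scope.


Section Defs.
Context {X : topologicalType}.

(* Entourages of the canonical uniform structure of a compact Hausdorff space:
   the neighbourhoods of the diagonal in X * X (product topology). *)
Definition entourage_diag (E : set (X * X)) : Prop :=
  exists U : set (X * X), open U /\ (forall x, U (x, x)) /\ U `<=` E.

Definition symmetric_ent (E : set (X * X)) : Prop :=
  forall x y, E (x, y) -> E (y, x).

Definition comp_ent (E1 E2 : set (X * X)) : set (X * X) :=
  [set p | exists z, E1 (p.1, z) /\ E2 (z, p.2)].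

(* partially continuous self-map: f is only meaningful on X \ I; the values of
   the total function f on I are irrelevant. *)
Definition partially_continuous (I : set X) (f : X -> X) : Prop :=
  closed I /\ {within ~` I, continuous f}.

Definition admissible (I : set X) (f : X -> X) (xi : nat -> set X) : Prop :=
  (forall n, xi n `<=` ~` I) /\ (forall n, f @` xi n.+1 `<=` xi n).

Fixpoint xi_max (I : set X) (f : X -> X) (n : nat) : set X :=
  match n with
  | 0 => setT
  | m.+1 => [set x | ~ I x /\ xi_max I f m (f x)]
  end.

Definition bowen_ball (I : set X) (f : X -> X) (n : nat) (E : set (X * X))
  (x : X) : set X :=
  [set y | xi_max I f n y /\ forall i, (i <= n)%N -> E (iter i f x, iter i f y)].

Definition separated_set (I : set X) (f : X -> X) (xi : nat -> set X) (n : nat)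
  (E : set (X * X)) (F : {fset X}) : Prop :=
  [set` F] `<=` xi n /\
  forall x y, x \in F -> y \in F -> x <> y -> ~ bowen_ball I f n E y x.

Definition covering_set (I : set X) (f : X -> X) (xi : nat -> set X) (n : nat)
  (E : set (X * X)) (F : {fset X}) : Prop :=
  [set` F] `<=` xi n /\
  xi n `<=` \bigcup_(x in [set` F]) bowen_ball I f n E x.

Variable R : realType.

Definition S_sep (I : set X) (f : X -> X) (xi : nat -> set X) (n : nat)
  (E : set (X * X)) : \bar R :=
  ereal_sup [set ((#|` F|)%fset%:R)%:E | F in separated_set I f xi n E].

(* R(n,xi,E): minimal cardinality of a (finite) covering set (+oo if none). *)
Definition R_cov (I : set X) (f : X -> X) (xi : nat -> set X) (n : nat)
  (E : set (X * X)) : \bar R :=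
  ereal_inf [set ((#|` F|)%fset%:R)%:E | F in covering_set I f xi n E].

Definition elog (x : \bar R) : \bar R :=
  match x with
  | r%:E => if r <= 0 then -oo%E else (ln r)%:E
  | +oo%E => +oo%E
  | -oo%E => -oo%E
  end.

Definition htop (I : set X) (f : X -> X) (xi : nat -> set X) : \bar R :=
  if `[< exists n, xi n = set0 >] then -oo%E
  else ereal_sup [set limn_esup (fun n => ((n%:R)^-1)%:E * elog (S_sep I f xi n E))%E
                 | E in entourage_diag].

End Defs.

(* Main.v *)
Require Import Defs.
From HB Require Import structures.
From mathcomp Require Import all_boot all_order all_algebra finmap.
From mathcomp Require Import all_classical all_reals all_analysis.
Import Order.TTheory GRing.Theory Num.Theory.
Local Open Scope classical_set_scope.
Local Open Scope ring_scope.

Section Helpers.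
Context {X : topologicalType}.

Lemma openX' (A B : set X) : open A -> open B -> open (A `*` B).
Proof.
move=> oA oB; rewrite openE => -[a b] [/= Aa Bb].
exists (A, B) => //=; split; apply: open_nbhs_nbhs; split => //.
Qed.

Lemma ent_box (U : set (X * X)) (a : X) : open U -> U (a, a) ->
  exists2 N, nbhs a N & forall u v, N u -> N v -> U (u, v).
Proof.
rewrite openE => oU Uaa.
have [[P Q] [/= Pa Qa] pqU] := oU _ Uaa.
exists (P `&` Q); first exact: filterI.
by move=> u v [Pu _] [_ Qv]; apply: (pqU (u, v)); split.
Qed.

Lemma ent_root (hX : hausdorff_space X) (cX : compact [set: X])
  (U : set (X * X)) : open U -> (forall x, U (x, x)) ->
  exists W : set (X * X), [/\ open W, (forall x, W (x, x)) &
     forall a b c, W (a, b) -> W (b, c) -> U (a, c)].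
Proof.
move=> oU dU.
pose D := [set V : set (X * X) | open V /\ forall x, V (x, x)].
pose G := filter_from D (fun V => [set W : set (X * X) | W `<=` V]).
have FG : Filter G.
  apply: filter_from_filter; first by exists setT; split => //; exact: openT.
  move=> V1 V2 [oV1 dV1] [oV2 dV2]; exists (V1 `&` V2).
    by split; [exact: openI | move=> x; split].
  by move=> W WV; split => p Wp; have [] := WV p Wp.
pose P (W : set (X * X)) (x' : X) := forall b c, W (x', b) -> W (b, c) -> U (x', c).
have := (compact_near_coveringP _).1 cX _ G P FG.
case.
  move=> x _.
  have [N Nx NU] := @ent_box U x oU (dU x).
  pose A := N°.
  have oA : open A by exact: open_interior.
  have nA : nbhs x A by exact: nbhs_interior.
  have AN : A `<=` N by move=> ? /interior_subset.
  have [N2 nN2 cN2] := compact_regular hX cX filterT nA.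
  pose B2 := N2°.
  have oB2 : open B2 by exact: open_interior.
  have nB2 : nbhs x B2 by exact: nbhs_interior.
  have cB2 : closure B2 `<=` A.
    by apply: subset_trans cN2; apply: closureS => ? /interior_subset.
  have [N1 nN1 cN1] := compact_regular hX cX filterT nB2.
  pose M := A `\` closure N1.
  pose Q := ~` closure B2.
  pose V := (B2 `*` B2) `|` (M `*` M) `|` (Q `*` Q).
  have oV : open V.
    apply: openU; first apply: openU; apply: openX' => //.
    - by apply: (@openI _ A (~` closure N1)) => //; apply: closed_openC; exact: closed_closure.
    - by apply: (@openI _ A (~` closure N1)) => //; apply: closed_openC; exact: closed_closure.
    - by apply: closed_openC; exact: closed_closure.
    - by apply: closed_openC; exact: closed_closure.
  have dV : forall p, V (p, p).
    move=> p; case: (pselect (B2 p)) => B2p; first by left; left.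
    case: (pselect (A p)) => Ap.
      left; right; split; split => //= /cN1 //.
    right; split => /= /cB2 //.
  exists (N1, [set W | W `<=` V]); first by split => //; exists V.
  move=> [x' W] /= [N1x' WV] b c Wxb Wbc.
  have x'B2 : B2 x' by apply: cN1; exact: subset_closure.
  have bB2 : B2 b.
    case: (WV _ Wxb) => [[[_ //]|[[_ /(_ (subset_closure N1x')) []] _]]|[/(_ (subset_closure x'B2)) [] _]].
  have cA : A c.
    case: (WV _ Wbc) => [[[_ /subset_closure/cB2 //]|[_ [] //]]|[/(_ (subset_closure bB2)) [] _]].
  apply: NU; apply: AN => //; apply: cB2; apply: subset_closure; exact: x'B2.
move=> V [oV dV] HV; exists V; split => //.
by move=> a b c; apply: (HV V) => //.
Qed.


Lemma ent_root3 (hX : hausdorff_space X) (cX : compact [set: X])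
  (E : set (X * X)) : entourage_diag E ->
  exists W : set (X * X), [/\ entourage_diag W, (forall x, W (x, x)) &
     forall a b c d, W (a, b) -> W (b, c) -> W (c, d) -> E (a, d)].
Proof.
move=> [U [oU [dU UE]]].
have [W1 [oW1 dW1 W1U]] := ent_root hX cX U oU dU.
have [W2 [oW2 dW2 W2W1]] := ent_root hX cX W1 oW1 dW1.
exists W2; split => //; first by exists W2; do 2 split => //.
move=> a b c d ab bc cd; apply: UE; apply: (W1U _ c).
- exact: W2W1 ab bc.
- exact: W2W1 cd (dW2 d).
Qed.

Lemma nbhs_forall_le (x : X) (P : nat -> X -> Prop) n :
  (forall i, (i <= n)%N -> nbhs x (P i)) ->
  nbhs x [set z | forall i, (i <= n)%N -> P i z].
Proof.
elim: n => [|n IH] H.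
  by apply: filterS (H 0%N isT) => z Pz i; rewrite leqn0 => /eqP ->.
have h1 := IH (fun i hi => H i (leqW hi)).
apply: filterS (filterI h1 (H n.+1 (leqnn _))) => z [A B] i; rewrite leq_eqVlt => /orP [/eqP -> // | ].
by rewrite ltnS; exact: A.
Qed.

Variables (I : set X) (f : X -> X).

Lemma adm_max xi : admissible I f xi -> forall n, xi n `<=` xi_max I f n.
Proof.
case=> hI hf; elim=> [|n IH] x //= xn.
split; [exact: hI xn | apply: IH; apply: hf; by exists x].
Qed.

Lemma adm_iter xi : admissible I f xi -> forall n i x, (i <= n)%N ->
  xi n x -> xi (n - i)%N (iter i f x).
Proof.
move=> [hI hf] n; elim=> [|i IH] x hi xn; first by rewrite subn0.
have h := IH x (ltnW hi) xn.
rewrite (_ : (n - i = (n - i.+1).+1)%N) in h; last by rewrite subnSK.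
by apply: hf; exists (iter i f x).
Qed.

Lemma cont_iter : (forall x, ~ I x -> {for x, continuous f}) ->
  forall i x, (forall j, (j < i)%N -> ~ I (iter j f x)) ->
  {for x, continuous (iter i f)}.
Proof.
move=> hc; elim=> [|i IH] x H; first exact: cvg_id.
apply: (@continuous_comp _ _ _ (iter i f) f x).
  by apply: IH => j hj; apply: H; exact: ltnW.
by apply: hc; apply: H.
Qed.

Lemma near_traj (hf : partially_continuous I f) (W : set (X * X)) n x :
  entourage_diag W -> (forall j, (j <= n)%N -> ~ I (iter j f x)) ->
  nbhs x [set z | forall i, (i <= n)%N ->
     W (iter i f x, iter i f z) /\ W (iter i f z, iter i f x)].
Proof.
move=> [U [oU [dU UW]]] hI.
have hc : forall x, ~ I x -> {for x, continuous f}.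
  case: hf => cI; rewrite continuous_open_subspace; last exact: closed_openC.
  by move=> H y Iy; apply: H; rewrite inE.
apply: nbhs_forall_le => i hi.
have ci : {for x, continuous (iter i f)}.
  by apply: cont_iter => // j hj; apply: hI; exact: leq_trans (ltnW hj) hi.
have [N Nx NU] := @ent_box U (iter i f x) oU (dU _).
have h : nbhs x [set z | N (iter i f z)] := ci _ Nx.
apply: filterS h => z Nz /=; split; apply: UW; apply: NU => //;
  exact: nbhs_singleton.
Qed.

End Helpers.
Arguments adm_max {X I f xi}.
Arguments adm_iter {X I f xi}.
Arguments near_traj {X I f} hf {W n x}.
Arguments ent_root3 {X} hX cX {E}.

Section Main.
Variables (R : realType) (X : topologicalType) (I : set X) (f : X -> X).
Local Open Scope ereal_scope.

Lemma partS xi xi' n E : xi n `<=` xi' n ->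
  S_sep R I f xi n E <= S_sep R I f xi' n E.
Proof.
move=> sub; apply: le_ereal_sup => _ [F [Fs Fsep] <-]; exists F => //.
by split => //; apply: subset_trans sub.
Qed.

Lemma partR (hf : partially_continuous I f) xi xi' n E E' E'' :
  admissible I f xi -> entourage_diag E'' -> symmetric_ent E' ->
  comp_ent E' E' `<=` E -> comp_ent E'' E'' `<=` E' ->
  closure (xi n) `<=` closure (xi' n) ->
  R_cov R I f xi n E <= R_cov R I f xi' n E''.
Proof.
move=> adm eE'' sE' cE cE' clsub.
apply: le_ereal_inf_tmp => _ [F' [F's F'cov] <-].
apply: ge_ereal_inf.
case: (pselect (exists y0, xi n y0)) => [[y0 y0xi]|nxi]; last first.
  exists 0%:E; last by rewrite lee_fin ler0n.
  exists fset0%fset; last by rewrite cardfs0.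
  split; first by move=> a Ha; exfalso; move: Ha; rewrite /= ?inE.
  by move=> y xy; exfalso; apply: nxi; exists y.
pose g x' := xget y0 [set y | xi n y /\ bowen_ball I f n E' x' y].
pose F := [fset g x' | x' in F']%fset.
exists (#|` F|%:R%:E); last by rewrite lee_fin ler_nat; exact: leq_imfset_card.
exists F => //; split.
  move=> a /= /imfsetP [x' _ ->]; rewrite /g.
  by case: xgetP => [a' _ []|_].
move=> y xy.
have hI : forall j, (j <= n)%N -> ~ I (iter j f y).
  move=> j jn; have := adm_iter adm _ _ _ jn xy; case: adm => hI _; exact: hI.
have := near_traj hf eE'' hI.
have /clsub := subset_closure xy.
move=> /[apply] -[z [xi'z Hz]].
have [x' F'x' [_ Hx']] := F'cov _ xi'z.
have Pex : exists y, xi n y /\ bowen_ball I f n E' x' y.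
  exists y; split => //; split; first exact: adm_max xy.
  move=> i hi; apply: cE'; exists (iter i f z); split; first exact: Hx'.
  exact: (Hz i hi).2.
have [gxi [_ gE]] := xgetPex y0 Pex.
exists (g x'); first by rewrite /= in_imfset.
split; first exact: adm_max xy.
move=> i hi; apply: cE; exists (iter i f x'); split.
  by apply: sE'; exact: gE.
apply: cE'; exists (iter i f z); split; first exact: Hx'.
exact: (Hz i hi).2.
Qed.

Lemma partS3 (hf : partially_continuous I f) xi xi' n E W :
  admissible I f xi -> entourage_diag W -> (forall x, W (x, x)) ->
  (forall a b c d, W (a, b) -> W (b, c) -> W (c, d) -> E (a, d)) ->
  closure (xi n) `<=` closure (xi' n) ->
  S_sep R I f xi n E <= S_sep R I f xi' n W.
Proof.
move=> adm eW dW W3 clsub.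
apply: ge_ereal_sup => _ [F [Fs Fsep] <-].
apply: le_ereal_sup_tmp.
pose P y := [set z | xi' n z /\ forall i, (i <= n)%N ->
     W (iter i f y, iter i f z) /\ W (iter i f z, iter i f y)].
pose g y := xget y (P y).
have Pg : forall y, xi n y -> P y (g y).
  move=> y xy; apply: xgetPex.
  have hI : forall j, (j <= n)%N -> ~ I (iter j f y).
    move=> j jn; have := adm_iter adm _ _ _ jn xy; case: adm => hI _; exact: hI.
  have := near_traj hf eW hI.
  have /clsub := subset_closure xy.
  by move=> /[apply] -[z [xi'z Hz]]; exists z.
have key : forall x y, x \in F -> y \in F ->
    (forall i, (i <= n)%N -> W (iter i f (g y), iter i f (g x))) -> x = y.
  move=> x y Fx Fy H; apply: contrapT => xy.
  apply: (Fsep x y Fx Fy xy); split; first exact: adm_max (Fs _ Fx).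
  move=> i hi; apply: (W3 _ (iter i f (g y)) (iter i f (g x))).
  - exact: ((Pg y (Fs _ Fy)).2 i hi).1.
  - exact: H.
  - exact: ((Pg x (Fs _ Fx)).2 i hi).2.
pose F' := [fset g x | x in F]%fset.
exists (#|` F'|%:R%:E); last first.
  rewrite card_in_imfset //.
  move=> x y Fx Fy gxy; apply: key => // i _; rewrite gxy; exact: dW.
exists F' => //; split.
  by move=> a /= /imfsetP [x Fx ->]; exact: (Pg x (Fs _ Fx)).1.
move=> a b /imfsetP [x Fx ->] /imfsetP [y Fy ->] gxy [_ H].
by apply: gxy; congr g; apply: key.
Qed.

Lemma limn_esup_le_ev (u v : nat -> \bar R) N :
  (forall n, (N <= n)%N -> u n <= v n) -> limn_esup u <= limn_esup v.
Proof.
move=> H; rewrite /limn_esup /limf_esup.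
apply: le_ereal_inf_tmp => _ [V HV <-].
apply: ge_ereal_inf.
exists (ereal_sup (u @` (V `&` [set n | (N <= n)%N]))).
  exists (V `&` [set n | (N <= n)%N]) => //.
  by apply: filterI => //; exists N.
apply: ge_ereal_sup => _ [n [Vn Nn] <-].
apply: le_trans (H n Nn) _; apply: ereal_sup_ubound; by exists n.
Qed.

Lemma elog_le (x y : \bar R) : x <= y -> elog x <= elog y.
Proof.
case: x => [r| |]; case: y => [s| |] //=; rewrite ?leNye ?leey //.
- rewrite lee_fin => rs.
  case: ifP => r0; first by rewrite leNye.
  have s0 : (0 < s)%R by apply: lt_le_trans rs; rewrite ltNge r0.
  rewrite (_ : (s <= 0)%R = false); last by rewrite leNgt s0.
  by rewrite lee_fin ler_ln // posrE // ltNge r0.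
all: by case: ifP => _; rewrite ?leNye ?leey.
Qed.

End Main.

Theorem lemma1p12 (R : realType) (X : topologicalType)
  (hX : hausdorff_space X) (cX : compact [set: X])
  (I : set X) (f : X -> X) (hf : partially_continuous I f)
  (xi xi' : nat -> set X) (hxi : admissible I f xi) (hxi' : admissible I f xi') :
  (forall (E E' E'' : set (X * X)) (n : nat),
      entourage_diag E -> entourage_diag E' -> entourage_diag E'' ->
      symmetric_ent E -> symmetric_ent E' -> symmetric_ent E'' ->
      comp_ent E' E' `<=` E -> comp_ent E'' E'' `<=` E' ->
      (xi n `<=` xi' n -> (S_sep R I f xi n E <= S_sep R I f xi' n E)%E) /\
      (closure (xi n) `<=` closure (xi' n) ->
         (R_cov R I f xi n E <= R_cov R I f xi' n E'')%E)) /\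
  ((exists N, forall n, (N <= n)%N -> closure (xi n) `<=` closure (xi' n)) ->
     (htop R I f xi <= htop R I f xi')%E).
Proof.
split.
  move=> E E' E'' n eE eE' eE'' sE sE' sE'' cE cE'; split.
  - exact: partS.
  - exact: (@partR R X I f hf xi xi' n E E' E'' hxi eE'' sE' cE cE').
move=> [N HN].
rewrite /htop.
case: asboolP => [_|Hne]; first by rewrite leNye.
case: asboolP => [[m Hm]|Hne'].
  exfalso; apply: Hne.
  have emp : forall k, (m <= k)%N -> xi' k = set0.
    elim=> [|k IH]; first by rewrite leqn0 => /eqP <-.
    rewrite leq_eqVlt => /orP [/eqP <- // | ]; rewrite ltnS => mk.
    apply/seteqP; split => // x xk.
    have := hxi'.2 k (f x) (ex_intro2 _ _ x xk erefl).
    by rewrite IH.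
  exists (maxn m N).
  have := HN (maxn m N) (leq_maxr _ _).
  rewrite emp ?leq_maxl // closure0 subset0.
  exact: closure_eq0.
apply: ge_ereal_sup => _ [E eE <-].
have [W [eW dW W3]] := ent_root3 hX cX eE.
apply: le_ereal_sup_tmp.
exists (limn_esup (fun n => ((n%:R)^-1)%:E * elog (S_sep R I f xi' n W)))%E;
  first by exists W.
apply: (@limn_esup_le_ev _ _ _ N) => n Nn.
apply: lee_wpmul2l; first by rewrite lee_fin invr_ge0 ler0n.
apply: elog_le; exact: (@partS3 R X I f hf xi xi' n E W hxi eW dW W3 (HN n Nn)).
Qed.
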